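(* Let $G$ be a finite group and $p$ a prime dividing $|G|$. There are equivalences of categories $$\mathrm{Sh}(G\text{-}\mathrm{Set},\mathcal{J}_{\rm sipp})\simeq\mathrm{Sh}(\mathcal{O}(G),\mathcal{J}_{\rm sipp})\simeq\mathrm{Sh}(\mathcal{O}_p(G),\mathcal{J}_{\min})=\mathrm{PSh}(\mathcal{O}_p(G)).$$
   Context: $G\text{-}\mathrm{Set}$ is the category of finite $G$-sets; $\mathcal{O}(G)$ its full subcategory of orbits $G/H$; $\mathcal{O}_p(G)$ the full subcategory on $G/Q$, $Q$ a $p$-subgroup. A sieve on $x$ is a set of morphisms with codomain $x$ closed under precomposition. $\mathcal{J}_{\rm sipp}$ on $G\text{-}\mathrm{Set}$: a sieve on $U$ is covering iff it contains all members of a family $\{\alpha_i:U_i\to U\}$ such that for every $u\in U$ there exist $i_0$ and $u_{i_0}\in\alpha_{i_0}^{-1}(u)$ with $[\mathrm{Stab}_G(u):\mathrm{Stab}_G(u_{i_0})]$ prime to $p$. On $\mathcal{O}(G)$, $\mathcal{J}_{\rm sipp}$ denotes the induced topology (covering sieves $S\cap\mathrm{Mor}\,\mathcal{O}(G)$ with $S$ covering in $G\text{-}\mathrm{Set}$). $\mathcal{J}_{\min}$ is the topology whose only covering sieve on $x$ is $\mathrm{Hom}(-,x)$. $\mathrm{Sh}(\mathcal{C},\mathcal{J})$ is the category of presheaves of sets $\mathfrak{F}$ such that for every covering sieve $S$ on $x$, restriction $\mathrm{Nat}(\mathrm{Hom}(-,x),\mathfrak{F})\to\mathrm{Nat}(S,\mathfrak{F})$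 is bijective; $\mathrm{PSh}(\mathcal{C})$ is the category of presheaves of sets. *)

(* Defs.v *)
From mathcomp Require Import all_boot all_fingroup pgroup.

Set Implicit Arguments.
Unset Strict Implicit.
Unset Printing Implicit Defensive.

(* Categories (hom-sets with Leibniz equality): used for the sites.          *)
Record Cat := MkCat {
  Ob : Type;
  Hom : Ob -> Ob -> Type;
  idm : forall x, Hom x x;
  comp : forall x y z, Hom y z -> Hom x y -> Hom x z;
  comp_idl : forall x y (f : Hom x y), comp (idm y) f = f;
  comp_idr : forall x y (f : Hom x y), comp f (idm x) = f;
  comp_assoc : forall x y z w (h : Hom z w) (g : Hom y z) (f : Hom x y),
      comp h (comp g f) = comp (comp h g) f
}.
Arguments Hom : clear implicits.
Arguments idm {C} x : rename.
Arguments comp {C x y z} : rename.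

Definition FullSub (C : Cat) (I : Type) (o : I -> Ob C) : Cat :=
  @MkCat I (fun i j => Hom C (o i) (o j)) (fun i => idm (o i))
    (fun i j k g f => comp g f)
    (fun i j f => comp_idl f) (fun i j f => comp_idr f)
    (fun i j k l h g f => comp_assoc h g f).

Definition sieve (C : Cat) (x : Ob C) := forall y, Hom C y x -> Prop.

Definition is_sieve (C : Cat) (x : Ob C) (S : sieve x) : Prop :=
  forall y z (f : Hom C y x) (g : Hom C z y), S y f -> S z (comp f g).

Definition topology (C : Cat) := forall x : Ob C, sieve x -> Prop.

Definition maxsieve (C : Cat) (x : Ob C) : sieve x := fun _ _ => True.
Arguments maxsieve {C} x _ _.

Definition Jmin (C : Cat) : topology C :=
  fun x S => is_sieve S /\ forall y (f : Hom C y x), S y f.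

Definition induced_top (C : Cat) (I : Type) (o : I -> Ob C) (J : topology C)
  : topology (FullSub o) :=
  fun i R => is_sieve R /\
    exists S : sieve (o i), J (o i) S /\
      forall j (f : Hom C (o j) (o i)), R j f <-> S (o j) f.

Record Presheaf (C : Cat) := MkPsh {
  psh :> Ob C -> Type;
  pmap : forall x y, Hom C y x -> psh x -> psh y;
  pmap_id : forall x (a : psh x), pmap (idm x) a = a;
  pmap_comp : forall x y z (f : Hom C y x) (g : Hom C z y) (a : psh x),
      pmap (comp f g) a = pmap g (pmap f a)
}.
Arguments pmap {C} p {x y} f a.

(* Natural transformations S => F, S a sieve on x viewed as a subfunctor    *)
(* of Hom(-,x).                                                             *)
Record SNat (C : Cat) (x : Ob C) (S : sieve x) (F : Presheaf C) := MkSNat {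
  snat : forall y (f : Hom C y x), S y f -> F y;
  snat_nat : forall y z (f : Hom C y x) (g : Hom C z y)
      (hf : S y f) (hfg : S z (comp f g)),
      snat hfg = pmap F g (snat hf)
}.

Definition snat_eq (C : Cat) (x : Ob C) (S : sieve x) (F : Presheaf C)
  (s t : SNat S F) : Prop :=
  forall y (f : Hom C y x) (h : S y f), snat s h = snat t h.

Definition restrict (C : Cat) (x : Ob C) (S : sieve x) (F : Presheaf C)
  (t : SNat (maxsieve x) F) : SNat S F.
Proof.
refine (@MkSNat C x S F (fun y f _ => snat t (I : maxsieve x y f)) _).
by move=> y z f g _ _; apply: snat_nat.
Defined.

Definition is_sheaf (C : Cat) (J : topology C) (F : Presheaf C) : Prop :=
  forall x (S : sieve x), J x S ->
    (forall t t' : SNat (maxsieve x) F,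
        snat_eq (restrict S t) (restrict S t') -> snat_eq t t') /\
    (forall s : SNat S F, exists t : SNat (maxsieve x) F,
        snat_eq (restrict S t) s).

Record SCat := MkSCat {
  SOb : Type;
  SHom : SOb -> SOb -> Type;
  Sheq : forall x y, SHom x y -> SHom x y -> Prop;
  Sid : forall x, SHom x x;
  Scomp : forall x y z, SHom y z -> SHom x y -> SHom x z
}.
Arguments SHom : clear implicits.
Arguments Sheq {A x y} : rename.
Arguments Sid {A} x : rename.
Arguments Scomp {A x y z} : rename.

Record Functor (A B : SCat) := MkFunctor {
  fobj :> SOb A -> SOb B;
  fmap : forall x y, SHom A x y -> SHom B (fobj x) (fobj y);
  fmap_proper : forall x y (f g : SHom A x y), Sheq f g -> Sheq (fmap f) (fmap g);
  fmap_id : forall x, Sheq (fmap (Sid x)) (Sid (fobj x));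
  fmap_comp : forall x y z (g : SHom A y z) (f : SHom A x y),
      Sheq (fmap (Scomp g f)) (Scomp (fmap g) (fmap f))
}.
Arguments fmap {A B} F {x y} f : rename.

Record EquivData (A B : SCat) := MkEquiv {
  eqv_F : Functor A B;
  eqv_G : Functor B A;
  eta : forall x : SOb A, SHom A (eqv_G (eqv_F x)) x;
  eta_inv : forall x : SOb A, SHom A x (eqv_G (eqv_F x));
  eta_iso1 : forall x, Sheq (Scomp (eta x) (eta_inv x)) (Sid x);
  eta_iso2 : forall x, Sheq (Scomp (eta_inv x) (eta x)) (Sid _);
  eta_nat : forall x y (h : SHom A x y),
      Sheq (Scomp h (eta x)) (Scomp (eta y) (fmap eqv_G (fmap eqv_F h)));
  eps : forall y : SOb B, SHom B (eqv_F (eqv_G y)) y;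
  eps_inv : forall y : SOb B, SHom B y (eqv_F (eqv_G y));
  eps_iso1 : forall y, Sheq (Scomp (eps y) (eps_inv y)) (Sid y);
  eps_iso2 : forall y, Sheq (Scomp (eps_inv y) (eps y)) (Sid _);
  eps_nat : forall x y (h : SHom B x y),
      Sheq (Scomp h (eps x)) (Scomp (eps y) (fmap eqv_F (fmap eqv_G h)))
}.

Definition cat_equivalent (A B : SCat) : Prop := inhabited (EquivData A B).

Record PNat (C : Cat) (F F' : Presheaf C) := MkPNat {
  pnat :> forall x, F x -> F' x;
  pnat_nat : forall x y (f : Hom C y x) (a : F x),
      pnat (pmap F f a) = pmap F' f (pnat a)
}.

Definition pnat_id (C : Cat) (F : Presheaf C) : PNat F F.
Proof. by refine (@MkPNat C F F (fun x a => a) _). Defined.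

Definition pnat_comp (C : Cat) (F1 F2 F3 : Presheaf C)
  (b : PNat F2 F3) (a : PNat F1 F2) : PNat F1 F3.
Proof.
refine (@MkPNat C F1 F3 (fun x u => b x (a x u)) _).
by move=> x y f u; rewrite !pnat_nat.
Defined.

Definition ShCat (C : Cat) (J : topology C) : SCat :=
  @MkSCat {F : Presheaf C | is_sheaf J F}
    (fun F F' => PNat (sval F) (sval F'))
    (fun F F' a b => forall x u, a x u = b x u)
    (fun F => pnat_id (sval F))
    (fun F1 F2 F3 b a => pnat_comp b a).

Section GSets.
Variables (gT : finGroupType) (G : {group gT}).
Local Open Scope group_scope.

Record gset := MkGSet { gcar : finType; gact : action G gcar }.

Definition equivariantb (X Y : gset) (f : {ffun gcar X -> gcar Y}) : bool :=
  [forall x, [forall g in G, f (gact X x g) == gact Y (f x) g]].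

Definition gHom (X Y : gset) := {f : {ffun gcar X -> gcar Y} | equivariantb f}.

Lemma gid_equiv (X : gset) : equivariantb [ffun x : gcar X => x].
Proof. by apply/forallP => x; apply/forall_inP => g _; rewrite !ffunE. Qed.

Lemma gcomp_equiv (X Y Z : gset) (g : gHom Y Z) (f : gHom X Y) :
  equivariantb [ffun x => sval g (sval f x)].
Proof.
case: g => g eg; case: f => f ef.
apply/forallP => x; apply/forall_inP => a Ga; rewrite !ffunE /=.
have ef' := forall_inP (forallP ef x) a Ga.
have eg' := forall_inP (forallP eg (f x)) a Ga.
by rewrite (eqP ef') (eqP eg').
Qed.

Definition gid (X : gset) : gHom X X := exist (@equivariantb X X) _ (gid_equiv X).
Definition gcomp (X Y Z : gset) (g : gHom Y Z) (f : gHom X Y) : gHom X Z :=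
  exist (@equivariantb X Z) _ (gcomp_equiv g f).

Lemma gcomp_idl X Y (f : gHom X Y) : gcomp (gid Y) f = f.
Proof. by apply: val_inj; apply/ffunP => x; rewrite /= !ffunE. Qed.
Lemma gcomp_idr X Y (f : gHom X Y) : gcomp f (gid X) = f.
Proof. by apply: val_inj; apply/ffunP => x; rewrite /= !ffunE. Qed.
Lemma gcomp_assoc X Y Z W (h : gHom Z W) (g : gHom Y Z) (f : gHom X Y) :
  gcomp h (gcomp g f) = gcomp (gcomp h g) f.
Proof. by apply: val_inj; apply/ffunP => x; rewrite /= !ffunE. Qed.

Definition GSetCat : Cat :=
  @MkCat gset gHom gid gcomp gcomp_idl gcomp_idr gcomp_assoc.

(* The transitive G-set G/H (right cosets H x, G acting by right           *)
(* multiplication), for H a subgroup of G.                                   *)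
Definition coset_pred (H : {group gT}) : pred {set gT} :=
  fun A => A \in rcosets H G.
Definition coset_car (H : {group gT}) : finType := {A : {set gT} | coset_pred H A}.

Lemma G_sub_coset_dom (H : {group gT}) : G \subset subact_dom (coset_pred H) 'Rs.
Proof.
rewrite /subact_dom.
have -> : [set x | coset_pred H x] = rcosets H G by apply/setP => x; rewrite inE.
exact: actsRs_rcosets.
Qed.

Definition coset_act (H : {group gT}) : action G (coset_car H) :=
  ((subaction (coset_car H) 'Rs) \ G_sub_coset_dom H)%act.

Definition orbit_gset (H : {group gT}) : gset := MkGSet (coset_act H).

Definition orbit_idx := {H : {group gT} | H \subset G}.
Definition OrbitCat : Cat :=
  @FullSub GSetCat _ (fun H : orbit_idx => orbit_gset (sval H)).

Definition orbitp_idx (p : nat) := {Q : {group gT} | (Q \subset G) && p.-group Q}%g.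
Definition OrbitpCat (p : nat) : Cat :=
  @FullSub GSetCat _ (fun Q : orbitp_idx p => orbit_gset (sval Q)).

Definition Jsipp (p : nat) : topology GSetCat :=
  fun (U : gset) (S : sieve (U : Ob GSetCat)) =>
    is_sieve S /\
    exists (I : Type) (Ui : I -> gset) (alpha : forall i, gHom (Ui i) U),
      (forall i, S (Ui i) (alpha i)) /\
      forall u : gcar U, exists i, exists ui : gcar (Ui i),
        sval (alpha i) ui = u /\
        coprime #|'C[u | gact U] : 'C[ui | gact (Ui i)]| p.

Definition Jsipp_orb (p : nat) : topology OrbitCat :=
  @induced_top GSetCat _ (fun H : orbit_idx => orbit_gset (sval H)) (Jsipp p).

End GSets.

Arguments GSetCat {gT} G.
Arguments OrbitCat {gT} G.
Arguments OrbitpCat {gT} G p.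
Arguments Jsipp {gT} G p _ _.
Arguments Jsipp_orb {gT} G p _ _.

(* Main.v *)
Require Import Defs.
From mathcomp Require Import all_boot all_fingroup pgroup.
From mathcomp Require Import sylow.
From Stdlib Require Import ProofIrrelevance FunctionalExtensionality ClassicalEpsilon.
Require Import Defs.

Set Implicit Arguments.
Unset Strict Implicit.
Unset Printing Implicit Defensive.



Lemma all_Jmin (C : Cat) (P : Presheaf C) : is_sheaf (@Jmin C) P.
Proof.
move=> x S [_ hS]; split.
- move=> t t' E y f [] /=. exact: (E y f (hS y f)).
- move=> s.
  unshelve eexists.
    refine (@MkSNat C x (maxsieve x) P (fun y f _ => snat s (hS y f)) _).
    by move=> y z f g _ _; apply: snat_nat.
  move=> y f h /=.
  by rewrite (proof_irrelevance _ (hS y f) h).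
Qed.

Section Generic.
Variables (C : Cat) (Ix : Type) (o : Ix -> Ob C).
Notation D := (FullSub o).

Definition Dsieve (x : Ob C) : sieve x := fun y f =>
  exists t : {i : Ix & (Hom C y (o i) * Hom C (o i) x)%type},
    f = comp (snd (projT2 t)) (fst (projT2 t)).
Arguments Dsieve : clear implicits.

Lemma Dsieve_sieve x : is_sieve (Dsieve x).
Proof.
move=> y z f g [[i [g1 h]] /= ->].
exists (existT _ i (comp g1 g, h)) => /=.
by rewrite comp_assoc.
Qed.

Definition H1 (J : topology C) := forall x, J x (Dsieve x).
Definition H2 (J : topology C) :=
  forall x S, J x S -> forall i (f : Hom C (o i) x), S (o i) f.

Section Ext.
Variable P : Presheaf D.

Definition compat x (a : forall i, Hom C (o i) x -> P i) : Prop :=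
  forall i j (f : Hom C (o i) x) (g : Hom C (o j) (o i)),
    a j (comp f g) = pmap P (g : Hom D j i) (a i f).

Definition Eob x := {a : forall i, Hom C (o i) x -> P i | compat a}.

Lemma Eeq x (a b : Eob x) : (forall i f, sval a i f = sval b i f) -> a = b.
Proof.
case: a b => [a ha] [b hb] /= E.
have ab : a = b.
  apply: functional_extensionality_dep => i.
  by apply: functional_extensionality => f.
subst b. by rewrite (proof_irrelevance _ ha hb).
Qed.

Lemma Emap_compat x y (h : Hom C y x) (a : Eob x) :
  compat (fun i f => sval a i (comp h f)).
Proof. move=> i j f g /=. rewrite comp_assoc. exact: (svalP a). Qed.

Definition Emap x y (h : Hom C y x) (a : Eob x) : Eob y :=
  exist _ _ (Emap_compat h a).

Definition Ext : Presheaf C.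
Proof.
refine (@MkPsh C Eob Emap _ _).
- by move=> x a; apply: Eeq => i f /=; rewrite comp_idl.
- by move=> x y z f g a; apply: Eeq => i k /=; rewrite comp_assoc.
Defined.
End Ext.

Definition Res (F : Presheaf C) : Presheaf D.
Proof.
refine (@MkPsh D (fun i => F (o i)) (fun i j f u => pmap F f u) _ _).
- move=> i u /=. exact: pmap_id.
- move=> i j k f g u /=. exact: pmap_comp.
Defined.

Definition yon (F : Presheaf C) x (u : F x) : SNat (maxsieve x) F.
Proof.
refine (@MkSNat C x (maxsieve x) F (fun y f _ => pmap F f u) _).
by move=> y z f g _ _ /=; apply: pmap_comp.
Defined.

Lemma snat_yon (F : Presheaf C) x (t : SNat (maxsieve x) F) y (f : Hom C y x) :
  snat t (I : maxsieve x y f) = pmap F f (snat t (I : maxsieve x x (idm x))).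
Proof.
have := @snat_nat C x (maxsieve x) F t x y (idm x) f I I.
by rewrite comp_idl.
Qed.

Lemma sheaf_sep (J : topology C) (F : Presheaf C) : is_sheaf J F ->
  forall x S, J x S -> forall u v : F x,
  (forall y f, S y f -> pmap F f u = pmap F f v) -> u = v.
Proof.
move=> shF x S JS u v E.
have [uq _] := shF x S JS.
have := uq (yon u) (yon v) (fun y f h => E y f h) x (idm x) I.
by rewrite /= !pmap_id.
Qed.

Lemma sheaf_glue (J : topology C) (F : Presheaf C) : is_sheaf J F ->
  forall x S, J x S -> forall s : SNat S F,
  exists u, forall y f (h : S y f), pmap F f u = snat s h.
Proof.
move=> shF x S JS s.
have [_ ex] := shF x S JS.
have [t Ht] := ex s.
exists (snat t (I : maxsieve x x (idm x))) => y f h.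
rewrite -snat_yon. exact: Ht.
Qed.

Section Sheaf.
Variables (J : topology C) (hJ1 : H1 J) (hJ2 : H2 J).

Lemma Ext_sheaf P : is_sheaf J (Ext P).
Proof.
move=> x S JS; split.
- move=> t t' E y f [] /=.
  have key : forall (t0 : SNat (maxsieve x) (Ext P)) i k,
      sval (snat t0 (I : maxsieve x x (idm x))) i k
      = sval (snat t0 (I : maxsieve x (o i) k)) i (idm (o i)).
    by move=> t0 i0 k; rewrite (snat_yon t0 k) /= comp_idr.
  rewrite (snat_yon t) (snat_yon t').
  apply: Eeq => i g /=.
  rewrite !key.
  by move: (E _ _ (hJ2 JS (comp f g))) => /= ->.
- move=> s.
  pose a i (f : Hom C (o i) x) := sval (snat s (hJ2 JS f)) i (idm (o i)).
  have ca : compat a.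
    move=> i j f g. rewrite /a.
    rewrite (@snat_nat C x S (Ext P) s (o i) (o j) f g (hJ2 JS f) (hJ2 JS (comp f g))).
    rewrite /= comp_idr.
    by rewrite -(svalP (snat s (hJ2 JS f)) i j (idm _) g) comp_idl.
  exists (yon (F:=Ext P) (x:=x) (exist _ a ca)) => y f h /=.
  apply: Eeq => i k /=. rewrite /a.
  rewrite (@snat_nat C x S (Ext P) s y (o i) f k h (hJ2 JS (comp f k))).
  by rewrite /= comp_idr.
Qed.

Section Res.
Variables (F : Presheaf C) (shF : is_sheaf J F).

Lemma rmap_compat x (u : F x) : compat (P := Res F) (fun i f => pmap F f u).
Proof. by move=> i j f g /=; rewrite pmap_comp. Qed.

Definition rmap x (u : F x) : Eob (Res F) x := exist _ _ (rmap_compat u).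

Lemma sepD y (u v : F y) :
  (forall j (k : Hom C (o j) y), pmap F k u = pmap F k v) -> u = v.
Proof.
move=> E. apply: (sheaf_sep shF (hJ1 y)) => z f [[j [g h]] /= ->].
by rewrite !pmap_comp E.
Qed.

Lemma rmap_inj x : injective (@rmap x).
Proof.
move=> u v E. apply: sepD => j k.
exact: (congr1 (fun b : Eob (Res F) x => sval b j k) E).
Qed.

Lemma rmap_nat x y (h : Hom C y x) (u : F x) :
  rmap (pmap F h u) = pmap (Ext (Res F)) h (rmap u).
Proof. by apply: Eeq => i f /=; rewrite pmap_comp. Qed.

Section Surj.
Variables (x : Ob C) (a : Eob (Res F) x).

Lemma Lfact y f i (g : Hom C y (o i)) (h : Hom C (o i) x) :
  f = comp h g -> forall j (k : Hom C (o j) y),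
  pmap F k (pmap F g (sval a i h)) = sval a j (comp f k).
Proof.
move=> -> j k. rewrite -pmap_comp -comp_assoc.
symmetry. exact: (svalP a i j h (comp g k)).
Qed.

Definition sfun y (f : Hom C y x) (h : Dsieve x y f) : F y :=
  let t := proj1_sig (constructive_indefinite_description _ h) in
  pmap F (fst (projT2 t)) (sval a (projT1 t) (snd (projT2 t))).

Lemma sfunL y f (h : Dsieve x y f) j (k : Hom C (o j) y) :
  pmap F k (sfun h) = sval a j (comp f k).
Proof.
rewrite /sfun.
case: (constructive_indefinite_description _ h) => [[i [g hh]] /= E].
exact: Lfact E j k.
Qed.

Lemma sfun_nat y z (f : Hom C y x) (g : Hom C z y) (hf : Dsieve x y f)
  (hfg : Dsieve x z (comp f g)) : sfun hfg = pmap F g (sfun hf).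
Proof.
apply: sepD => j k.
by rewrite sfunL -pmap_comp sfunL comp_assoc.
Qed.

Lemma rmap_surj : exists u, rmap u = a.
Proof.
have [u Hu] := sheaf_glue shF (hJ1 x) (MkSNat sfun_nat).
exists u. apply: Eeq => i f /=.
have hf : Dsieve x (o i) f.
  by exists (existT _ i (idm (o i), f)) => /=; rewrite comp_idr.
rewrite (Hu _ _ hf) /=.
apply: sepD => j k.
rewrite sfunL.
exact: (svalP a i j f k).
Qed.
End Surj.

Definition rinv x (a : Eob (Res F) x) : F x :=
  proj1_sig (constructive_indefinite_description _ (rmap_surj a)).

Lemma rinvK x (a : Eob (Res F) x) : rmap (rinv a) = a.
Proof. exact: (proj2_sig (constructive_indefinite_description _ (rmap_surj a))). Qed.

Lemma rmapK x (u : F x) : rinv (rmap u) = u.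
Proof. apply: rmap_inj. by rewrite rinvK. Qed.

End Res.

Definition ResN (F F' : Presheaf C) (al : PNat F F') : PNat (Res F) (Res F').
Proof.
refine (@MkPNat D (Res F) (Res F') (fun i u => al (o i) u) _).
by move=> i j f u /=; rewrite pnat_nat.
Defined.

Lemma ExtN_compat (P P' : Presheaf D) (be : PNat P P') x (a : Eob P x) :
  compat (P := P') (fun i f => be i (sval a i f)).
Proof. by move=> i j f g /=; rewrite (svalP a) pnat_nat. Qed.

Definition ExtN (P P' : Presheaf D) (be : PNat P P') : PNat (Ext P) (Ext P').
Proof.
refine (@MkPNat C (Ext P) (Ext P') (fun x a => exist _ _ (ExtN_compat be a)) _).
by move=> x y f a; apply: Eeq.
Defined.

Definition Phi : Functor (ShCat J) (ShCat (@Jmin D)).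
Proof.
refine (@MkFunctor (ShCat J) (ShCat (@Jmin D))
  (fun F => exist _ (Res (sval F)) (all_Jmin _))
  (fun F F' al => ResN al) _ _ _).
- by move=> F F' a b E i u; apply: E.
- by [].
- by [].
Defined.

Definition Psi : Functor (ShCat (@Jmin D)) (ShCat J).
Proof.
refine (@MkFunctor (ShCat (@Jmin D)) (ShCat J)
  (fun P => exist _ (Ext (sval P)) (Ext_sheaf _))
  (fun P P' be => ExtN be) _ _ _).
- by move=> P P' a b E x u; apply: Eeq => i f /=; apply: E.
- by move=> P x u; apply: Eeq.
- by move=> P1 P2 P3 g f x u; apply: Eeq.
Defined.

Definition etaN (F : {F : Presheaf C | is_sheaf J F}) :
  PNat (Ext (Res (sval F))) (sval F).
Proof.
refine (@MkPNat C (Ext (Res (sval F))) (sval F) (fun x (a : Eob (Res (sval F)) x) => rinv (svalP F) a) _).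
move=> x y f a. apply: (rmap_inj (svalP F)).
by rewrite rmap_nat !rinvK.
Defined.

Definition etainvN (F : Presheaf C) : PNat F (Ext (Res F)).
Proof.
refine (@MkPNat C F (Ext (Res F)) (fun x (u : F x) => rmap u) _).
by move=> x y f u; rewrite rmap_nat.
Defined.

Definition epsN (P : Presheaf D) : PNat (Res (Ext P)) P.
Proof.
refine (@MkPNat D (Res (Ext P)) P (fun i (a : Eob P (o i)) => sval a i (idm (o i))) _).
move=> i j f a /=.
rewrite comp_idr -(svalP a i j (idm _) f) /=.
by rewrite comp_idl.
Defined.

Lemma epsinv_compat (P : Presheaf D) i (b : P i) :
  compat (P := P) (x := o i) (fun j f => pmap P (f : Hom D j i) b).
Proof. by move=> j k f g /=; rewrite pmap_comp. Qed.

Definition epsinvN (P : Presheaf D) : PNat P (Res (Ext P)).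
Proof.
refine (@MkPNat D P (Res (Ext P)) (fun i (b : P i) => exist _ _ (epsinv_compat b)) _).
by move=> i j f b; apply: Eeq => k g /=; rewrite pmap_comp.
Defined.

Definition comparison : EquivData (ShCat J) (ShCat (@Jmin D)).
Proof.
refine (@MkEquiv (ShCat J) (ShCat (@Jmin D)) Phi Psi
  (fun F => etaN F) (fun F => etainvN (sval F)) _ _ _
  (fun P => epsN (sval P)) (fun P => epsinvN (sval P)) _ _ _).
- by move=> F x u /=; rewrite rmapK.
- by move=> F x a /=; rewrite rinvK.
- move=> F F' h x a /=.
  apply: (rmap_inj (svalP F')). rewrite rinvK.
  apply: Eeq => i f /=.
  by rewrite -pnat_nat -[in RHS](rinvK (svalP F) a).
- by move=> P i b /=; rewrite pmap_id.
- move=> P x a /=. apply: Eeq => j f /=.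
  by rewrite -(svalP a x j (idm _) f) /= comp_idl.
- by [].
Defined.

End Sheaf.
End Generic.



Lemma induced_H1 (C : Cat) (K : Type) (o2 : K -> Ob C) (Ix : Type) (o1 : Ix -> K)
  (J : topology C) :
  @H1 C Ix (fun i => o2 (o1 i)) J -> @H1 (FullSub o2) Ix o1 (@induced_top C K o2 J).
Proof.
move=> h k; split; first exact: Dsieve_sieve.
exists (@Dsieve C Ix (fun i => o2 (o1 i)) (o2 k)); split; first exact: h.
by move=> j f; split.
Qed.

Lemma induced_H2 (C : Cat) (K : Type) (o2 : K -> Ob C) (Ix : Type) (o1 : Ix -> K)
  (J : topology C) :
  @H2 C Ix (fun i => o2 (o1 i)) J -> @H2 (FullSub o2) Ix o1 (@induced_top C K o2 J).
Proof.
move=> h k R [_ [S [JS HRS]]] i f.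
apply/HRS. exact: h _ _ JS i f.
Qed.

Lemma equiv_sym (A B : SCat) : cat_equivalent A B -> cat_equivalent B A.
Proof.
case=> E; constructor.
exact: (@MkEquiv B A (eqv_G E) (eqv_F E) (eps E) (eps_inv E) (eps_iso1 E)
  (eps_iso2 E) (eps_nat E) (eta E) (eta_inv E) (eta_iso1 E) (eta_iso2 E) (eta_nat E)).
Qed.

Section FP.
Variables (Ca Cb : Cat) (Ja : topology Ca) (Jb : topology Cb)
  (F : Functor (ShCat Ja) (ShCat Jb)).
Lemma fmap_compP (x y z : SOb (ShCat Ja)) (g : SHom (ShCat Ja) y z)
  (f : SHom (ShCat Ja) x y) c (u : sval (F x) c) :
  @pnat Cb _ _ (fmap F g) c (@pnat Cb _ _ (fmap F f) c u) = @pnat Cb _ _ (fmap F (Scomp g f)) c u.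
Proof. symmetry; exact: (fmap_comp F g f c u). Qed.
Lemma fmap_idP (x : SOb (ShCat Ja)) c (u : sval (F x) c) :
  @pnat Cb _ _ (fmap F (Sid x)) c u = u.
Proof. exact: (fmap_id F x c u). Qed.
Lemma fmap_properP (x y : SOb (ShCat Ja)) (f g : SHom (ShCat Ja) x y) c
  (u : sval (F x) c) : Sheq f g -> @pnat Cb _ _ (fmap F f) c u = @pnat Cb _ _ (fmap F g) c u.
Proof. by move=> E; exact: (fmap_proper F E c u). Qed.
End FP.

Section Trans.
Variables (C1 C2 C3 : Cat) (J1 : topology C1) (J2 : topology C2) (J3 : topology C3).
Notation A1 := (ShCat J1).
Notation A2 := (ShCat J2).
Notation A3 := (ShCat J3).

Definition fcomp (Ca Cb Cc : Cat) (Ja : topology Ca) (Jb : topology Cb) (Jc : topology Cc)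
  (F2 : Functor (ShCat Jb) (ShCat Jc)) (F1 : Functor (ShCat Ja) (ShCat Jb)) :
  Functor (ShCat Ja) (ShCat Jc).
Proof.
refine (@MkFunctor (ShCat Ja) (ShCat Jc) (fun x => F2 (F1 x))
  (fun x y f => fmap F2 (fmap F1 f)) _ _ _).
- move=> x y f g E. apply: fmap_proper. apply: fmap_proper. exact E.
- move=> x c u /=. rewrite (fmap_proper F2 (fmap_id F1 x) c u). exact: (fmap_id F2 _ c u).
- move=> x y z g f c u /=. rewrite (fmap_proper F2 (fmap_comp F1 g f) c u).
  exact: (fmap_comp F2 _ _ c u).
Defined.

Lemma equiv_trans : cat_equivalent A1 A2 -> cat_equivalent A2 A3 -> cat_equivalent A1 A3.
Proof.
case=> E1; case=> E2; constructor.
pose F1 := eqv_F E1; pose G1 := eqv_G E1; pose F2 := eqv_F E2; pose G2 := eqv_G E2.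
refine (@MkEquiv A1 A3 (fcomp F2 F1) (fcomp G1 G2)
  (fun x => Scomp (eta E1 x) (fmap G1 (eta E2 (F1 x))))
  (fun x => Scomp (fmap G1 (eta_inv E2 (F1 x))) (eta_inv E1 x)) _ _ _
  (fun y => Scomp (eps E2 y) (fmap F2 (eps E1 (G2 y))))
  (fun y => Scomp (fmap F2 (eps_inv E1 (G2 y))) (eps_inv E2 y)) _ _ _).
- move=> x c u /=.
  rewrite fmap_compP (fmap_properP _ (eta_iso1 E2 (F1 x))) fmap_idP.
  exact: (eta_iso1 E1 x c u).
- move=> x c u /=.
  have /= e := eta_iso2 E1 x c; rewrite e.
  rewrite fmap_compP (fmap_properP _ (eta_iso2 E2 (F1 x))) fmap_idP //.
- move=> x y h c u /=.
  have /= e := eta_nat E1 h c; rewrite e. congr (_ _ c _).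
  by rewrite !fmap_compP (fmap_properP _ (eta_nat E2 (fmap F1 h))).
- move=> y c u /=.
  rewrite fmap_compP (fmap_properP _ (eps_iso1 E1 (G2 y))) fmap_idP.
  exact: (eps_iso1 E2 y c u).
- move=> y c u /=.
  have /= e := eps_iso2 E2 y c; rewrite e.
  rewrite fmap_compP (fmap_properP _ (eps_iso2 E1 (G2 y))) fmap_idP //.
- move=> x y h c u /=.
  have /= e := eps_nat E2 h c; rewrite e. congr (_ _ c _).
  by rewrite !fmap_compP (fmap_properP _ (eps_nat E1 (fmap G2 h))).
Qed.
End Trans.



Section Grp.
Variables (gT : finGroupType) (G : {group gT}).
Local Open Scope group_scope.

Lemma astab1E (X : gset G) (v : gcar X) a :
  (a \in 'C[v | gact X]) = (a \in G) && (gact X v a == v).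
Proof. by rewrite !inE sub1set inE. Qed.

Lemma astab1_sub (X : gset G) (v : gcar X) : 'C[v | gact X] \subset G.
Proof. by apply/subsetP => a; rewrite astab1E => /andP[]. Qed.

Lemma equivE (X Y : gset G) (f : gHom X Y) x g : g \in G ->
  sval f (gact X x g) = gact Y (sval f x) g.
Proof.
case: f => f ef /= Gg.
exact: (eqP (forall_inP (forallP ef x) g Gg)).
Qed.

Lemma coset_actE (H : {group gT}) (A : coset_car G H) g : g \in G ->
  val (gact (orbit_gset G H) A g) = val A :* g.
Proof.
move=> Gg. rewrite /= /coset_act /= val_subact.
by rewrite (subsetP (G_sub_coset_dom G H) g Gg) /= rcosetE.
Qed.

Lemma coset_in (H : {group gT}) (A : coset_car G H) :
  exists2 x, x \in G & val A = H :* x.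
Proof. by case: A => A /= /rcosetsP. Qed.

Lemma coset_subG (H : {group gT}) (A : coset_car G H) : H \subset G ->
  forall y, y \in val A -> y \in G.
Proof.
move=> sHG y; have [x Gx ->] := coset_in A.
case/rcosetP => h Hh ->. by rewrite groupM // (subsetP sHG).
Qed.

Lemma repr_coset (H : {group gT}) (A : coset_car G H) : repr (val A) \in val A.
Proof. have [x Gx ->] := coset_in A. exact: mem_repr_rcoset. Qed.

Lemma pt_proof (H : {group gT}) : coset_pred G H (H : {set gT}).
Proof. by apply/rcosetsP; exists 1; rewrite ?group1 ?rcoset1. Qed.

Definition pt (H : {group gT}) : coset_car G H := exist _ (H : {set gT}) (pt_proof H).

Lemma astab_pt (H : {group gT}) : H \subset G ->
  'C[pt H | gact (orbit_gset G H)] = H.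
Proof.
move=> sHG; apply/setP => g; rewrite (astab1E (X := orbit_gset G H)).
apply/andP/idP => [[Gg /eqP E]|Hg].
- have := coset_actE (pt H) Gg. rewrite E /= => E'.
  by rewrite E' rcoset_refl.
- have Gg := subsetP sHG g Hg. split => //. apply/eqP/val_inj.
  by rewrite coset_actE //= rcoset_id.
Qed.

Section Phi.
Variables (H : {group gT}) (X : gset G) (v : gcar X).
Hypothesis (sHC : H \subset 'C[v | gact X]).

Lemma sHG : H \subset G.
Proof. exact: subset_trans sHC (astab1_sub v). Qed.

Lemma fixv h : h \in H -> gact X v h = v.
Proof. by move=> Hh; have := subsetP sHC h Hh; rewrite astab1E => /andP[_ /eqP]. Qed.

Lemma act_rcoset x z : x \in G -> z \in H :* x -> gact X v z = gact X v x.
Proof.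
move=> Gx; rewrite mem_rcoset => Hz.
have Gzx := subsetP sHG _ Hz.
have -> : z = z * x^-1 * x by rewrite mulgKV.
by rewrite actMin // fixv.
Qed.

Definition phi (A : coset_car G H) : gcar X := gact X v (repr (val A)).

Lemma phi_any (A : coset_car G H) y : y \in val A -> phi A = gact X v y.
Proof.
have [x Gx E] := coset_in A.
move=> yA; rewrite /phi.
have rA : repr (val A) \in H :* x by rewrite -E; apply: repr_coset.
rewrite E in yA.
by rewrite (act_rcoset Gx yA) (act_rcoset Gx rA).
Qed.

Lemma phi_equiv : @equivariantb gT G (orbit_gset G H) X [ffun A => phi A].
Proof.
apply/forallP => A; apply/forall_inP => g Gg; rewrite !ffunE; apply/eqP.
have rA := repr_coset A.
have GrA := coset_subG sHG rA.
rewrite (phi_any (y := repr (val A) * g)).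
  by rewrite actMin.
by rewrite coset_actE // mem_rcoset mulgK.
Qed.

Definition phi_hom : gHom (orbit_gset G H) X := exist (@equivariantb gT G (orbit_gset G H) X) _ phi_equiv.

Lemma phi_pt : sval phi_hom (pt H) = v.
Proof. by rewrite /= ffunE /phi /= repr_group act1. Qed.

End Phi.

Section Top.
Variable p : nat.
Hypothesis p_prime : prime p.

Definition oP (Q : orbitp_idx G p) : gset G := orbit_gset G (sval Q).

Lemma sylow_coprime (H P : {group gT}) : p.-Sylow(H) P -> coprime #|H : P| p.
Proof.
move=> /and3P[_ _ h]. by rewrite coprime_sym prime_coprime // -p'natE.
Qed.

Lemma gset_H1 : @H1 (GSetCat G) (orbitp_idx G p) oP (Jsipp G p).
Proof.
move=> X; split; first exact: Dsieve_sieve.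
pose Pu (u : gcar X) := sval (Sylow_exists p 'C[u | gact X]%G).
have PuS u : p.-Sylow('C[u | gact X]) (Pu u) := svalP (Sylow_exists p 'C[u | gact X]%G).
have sPC u : Pu u \subset 'C[u | gact X] := pHall_sub (PuS u).
have sPG u : Pu u \subset G := subset_trans (sPC u) (astab1_sub u).
have prf u : (Pu u \subset G) && p.-group (Pu u).
  by rewrite sPG; exact: (pHall_pgroup (PuS u)).
exists (gcar X), (fun u => orbit_gset G (Pu u)), (fun u => phi_hom (sPC u)).
split.
- move=> u.
  exists (existT _ (exist _ (Pu u) (prf u) : orbitp_idx G p) (gid _, phi_hom (sPC u))) => /=.
  exact: (esym (gcomp_idr _)).
- move=> u; exists u, (pt (Pu u)); split; first exact: phi_pt.
  rewrite astab_pt //. exact: sylow_coprime (PuS u).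
Qed.

Lemma gset_H2 : @H2 (GSetCat G) (orbitp_idx G p) oP (Jsipp G p).
Proof.
move=> X S [sS [Ix [Ui [alpha [Sal cov]]]]] Q.
case: Q => Q hQ /= f; have /andP[sQG pQ] := hQ.
pose u := sval f (pt Q).
have QCu : Q \subset 'C[u | gact X].
  apply/subsetP => q Qq; have Gq := subsetP sQG q Qq.
  rewrite astab1E Gq /= /u -equivE //.
  have : q \in 'C[pt Q | gact (orbit_gset G Q)] by rewrite astab_pt.
  by rewrite (astab1E (X := orbit_gset G Q)) => /andP[_ /eqP ->].
have [i [ui [Eu cop]]] := cov u.
have sKH : 'C[ui | gact (Ui i)] \subset 'C[u | gact X].
  apply/subsetP => k; rewrite !astab1E => /andP[Gk /eqP Ek]; rewrite Gk /=.
  by rewrite -Eu -equivE // Ek.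
have [P PS] := Sylow_exists p 'C[ui | gact (Ui i)]%G.
have sPK := pHall_sub PS.
have PSH : p.-Sylow('C[u | gact X]) P.
  apply/and3P; split.
  - exact: subset_trans sPK sKH.
  - exact: (pHall_pgroup PS).
  - rewrite -(Lagrange_index sKH sPK) pnatM.
    rewrite p'natE // -prime_coprime // coprime_sym cop /=.
    by case/and3P: PS.
have [x Hx sQPx] := Sylow_subJ PSH QCu pQ.
have Gx := subsetP (astab1_sub u) x Hx.
pose v := gact (Ui i) ui x.
have QCv : Q \subset 'C[v | gact (Ui i)].
  apply/subsetP => q Qq; have Gq := subsetP sQG q Qq.
  rewrite astab1E Gq /= /v -actMin // conjgCV actMin ?groupJ ?groupV //.
  have : q ^ x^-1 \in 'C[ui | gact (Ui i)].
    by apply: (subsetP sPK); rewrite -mem_conjg; exact: (subsetP sQPx).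
  by rewrite astab1E => /andP[_ /eqP ->].
have E : f = gcomp (alpha i) (phi_hom QCv).
  apply: val_inj; apply/ffunP => A /=. rewrite !ffunE /phi.
  have rA := repr_coset A.
  have Gr := coset_subG sQG rA.
  have EA : gact (orbit_gset G Q) (pt Q) (repr (val A)) = A.
    apply: val_inj; rewrite coset_actE //=.
    have [y Gy Ey] := coset_in A.
    by rewrite Ey rcoset_repr.
  transitivity (sval f (gact (orbit_gset G Q) (pt Q) (repr (val A)))).
    by rewrite EA.
  rewrite (equivE f) // /v equivE // equivE // Eu.
  have : x \in 'C[u | gact X] := Hx.
  by rewrite astab1E => /andP[_ /eqP ->].
have h := sS _ _ (alpha i) (phi_hom QCv) (Sal i).
rewrite E; exact: h.
Qed.
End Top.
End Grp.



Lemma o1_sub (gT : finGroupType) (G : {group gT}) (p : nat) (Q : orbitp_idx G p) :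
  sval Q \subset G.
Proof. by case/andP: (svalP Q). Qed.

Theorem corollary3p2p6 (gT : finGroupType) (G : {group gT}) (p : nat)
    (p_prime : prime p) (p_dvd : p %| #|G|) :
  cat_equivalent (ShCat (Jsipp G p)) (ShCat (Jsipp_orb G p)) /\
  cat_equivalent (ShCat (Jsipp_orb G p)) (ShCat (@Jmin (OrbitpCat G p))) /\
  (forall F : Presheaf (OrbitpCat G p), is_sheaf (@Jmin (OrbitpCat G p)) F).
Proof.
pose o2 := fun H : orbit_idx G => orbit_gset G (sval H).
pose o1 := fun Q : orbitp_idx G p =>
  exist (fun H : {group gT} => H \subset G) (sval Q) (o1_sub Q) : orbit_idx G.
have h1 : @H1 (GSetCat G) _ (@oP gT G p) (Jsipp G p) := gset_H1 p_prime.
have h2 : @H2 (GSetCat G) _ (@oP gT G p) (Jsipp G p) := gset_H2 p_prime.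
have h1' : @H1 (GSetCat G) _ (fun i => o2 (o1 i)) (Jsipp G p) := h1.
have h2' : @H2 (GSetCat G) _ (fun i => o2 (o1 i)) (Jsipp G p) := h2.
have EO : EquivData (ShCat (Jsipp_orb G p)) (ShCat (@Jmin (OrbitpCat G p))).
  exact: (@comparison (OrbitCat G) _ o1 (Jsipp_orb G p)
            (induced_H1 h1') (induced_H2 h2')).
have EG : EquivData (ShCat (Jsipp G p)) (ShCat (@Jmin (OrbitpCat G p))).
  exact: (comparison h1 h2).
split; last split.
- exact: equiv_trans (inhabits EG) (equiv_sym (inhabits EO)).
- exact: inhabits EO.
- move=> F; exact: all_Jmin.
Qed.
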